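(* Let $p_j>0$, $q_{j+1}>0$, $r_j\ge 0$ ($j\ge 0$) be the one-step transition probabilities of a random walk on $\mathcal{N}=\{0,1,2,\dots\}$ (up-step $p_j$, holding $r_j$, down-step $q_j$ from state $j$), with $q_0:=0$ and $p_j+q_j+r_j=1$ for all $j\ge0$. Define polynomials $Q_n$ by $Q_0(x)=1$, $p_0Q_1(x)=x-r_0$, and $xQ_n(x)=q_nQ_{n-1}(x)+r_nQ_n(x)+p_nQ_{n+1}(x)$ for $n\ge 1$. Let $\psi$ be the unique Borel probability measure on $[-1,1]$ with infinite support with respect to which the $Q_n$ are orthogonal, let $\eta:=\sup\operatorname{supp}(\psi)$, and let $\theta\ge\eta$. If the random walk is periodic (i.e. $r_j=0$ for all $j$), then $|Q_n(\theta)/Q_n(-\theta)|=1$ for all $n$. If the random walk is aperiodic (i.e. $r_j>0$ for some $j$), then $|Q_n(\theta)/Q_n(-\theta)|$ is decreasing in $n$ and tends to a limit satisfying \[0\le\lim_{n\to\infty}|Q_n(\theta)/Q_n(-\theta)|<1.\]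
   Context: It is known that $\eta>0$ and that $Q_n(x)>0$ for all $n\ge0$ whenever $x\ge\eta$. *)

(* Defs.v *)
From HB Require Import structures.
From mathcomp Require Import all_boot all_order all_algebra.
From mathcomp Require Import all_classical all_reals all_analysis.
Set Implicit Arguments. Unset Strict Implicit. Unset Printing Implicit Defensive.
Import Order.TTheory GRing.Theory Num.Theory.
Import numFieldNormedType.Exports.
Local Open Scope classical_set_scope.
Local Open Scope ring_scope.

Fixpoint Qpair (R : realType) (p q r : nat -> R) (n : nat) (x : R) : R * R :=
  match n with
  | 0%N => (1, (x - r 0%N) / p 0%N)
  | m.+1 => let: (a, b) := Qpair p q r m x in
            (b, ((x - r m.+1) * b - q m.+1 * a) / p m.+1)
  end.

Definition Qn (R : realType) (p q r : nat -> R) (n : nat) (x : R) : R :=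
  (Qpair p q r n x).1.

Definition msupport (R : realType) (mu : set R -> \bar R) : set R :=
  [set x | forall U : set R, open U -> U x -> (0 < mu U)%E].

(* Main.v *)
Require Import Defs.
From HB Require Import structures.
From mathcomp Require Import all_boot all_order all_algebra.
From mathcomp Require Import all_classical all_reals all_analysis.
From mathcomp Require Import ring lra measurable_realfun.
From mathcomp Require finmap.
Import Order.TTheory GRing.Theory Num.Theory.
Import numFieldNormedType.Exports.
Local Open Scope classical_set_scope.
Local Open Scope ring_scope.
Section Alg.
Variable R : realType.
Variables p q r : nat -> R.
Hypothesis hp : forall j, 0 < p j.
Hypothesis hq : forall j, 0 < q j.+1.
Hypothesis hr : forall j, 0 <= r j.
Hypothesis hq0 : q 0%N = 0.
Hypothesis hsum : forall j, p j + q j + r j = 1.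

Notation Q := (Qn p q r).

Lemma Qpair2 n x : (Qpair p q r n x).2 = Q n.+1 x.
Proof. by rewrite /Qn /=; case: (Qpair p q r n x). Qed.

Lemma Q0 x : Q 0 x = 1. Proof. by []. Qed.
Lemma Q1 x : Q 1 x = (x - r 0%N) / p 0%N. Proof. by []. Qed.
Lemma QSS n x : Q n.+2 x = ((x - r n.+1) * Q n.+1 x - q n.+1 * Q n x) / p n.+1.
Proof.
by rewrite /Qn /=; case: (Qpair p q r n x) => a b /=.
Qed.

Lemma Qrec n x : p n * Q n.+1 x = (x - r n) * Q n x - q n * Q n.-1 x.
Proof.
have pn := hp n; case: n pn => [|n] pn.
  by rewrite Q1 Q0 hq0 mul0r subr0 mulr1 mulrC divfK ?gt_eqF.
by rewrite QSS mulrC divfK ?gt_eqF.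
Qed.

Lemma Qge1 x : 1 <= x -> forall n, 0 < Q n x <= Q n.+1 x.
Proof.
move=> x1; elim=> [|n /andP[IH1 IH2]].
  rewrite Q0 Q1 ltr01 /= ler_pdivlMr // mul1r.
  have := hsum 0%N; rewrite hq0 addr0 => h; lra.
apply/andP; split; first lra.
have := Qrec n.+1 x => /= e.
have hpn := hp n.+1; have hqn := hq n; have hrn := hr n.+1; have s := hsum n.+1.
have : p n.+1 * Q n.+1 x <= p n.+1 * Q n.+2 x.
  rewrite e; nra.
by rewrite ler_pM2l.
Qed.


Section Ratio.
Variable th : R.
Hypothesis apos : forall n, 0 < Q n th.
Let a n := Q n th.
Let b n := (-1) ^+ n * Q n (- th).
Let E n := a n.+1 * b n - a n * b n.+1.

Lemma brec n : p n * b n.+1 = (th + r n) * b n - q n * b n.-1.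
Proof.
case: n => [|n].
  rewrite /b expr0 expr1 !mul1r Q1 Q0 hq0 mul0r subr0 mulr1.
  rewrite mulrC mulN1r mulNr divfK ?gt_eqF //; lra.
rewrite /b !exprS /=; set s := (-1) ^+ n.
transitivity (s * (p n.+1 * Q n.+2 (- th))); first ring.
rewrite (Qrec n.+1 (-th)) /=; ring.
Qed.

Lemma Eid n : p n * E n = -2 * r n * a n * b n + q n * E n.-1.
Proof.
have e1 := Qrec n th; have e2 := brec n.
rewrite /E.
transitivity ((p n * a n.+1) * b n - a n * (p n * b n.+1)); first ring.
rewrite /a e1 -/(a n) e2.
case: n e1 e2 => [|n] e1 e2 /=.
  rewrite hq0 !mul0r !subr0 addr0 /a /b Q0 expr0 !mul1r; ring.
rewrite /a /b; ring.
Qed.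

Lemma bposE n : 0 < b n /\ E n <= 0.
Proof.
have hb0 : b 0 = 1 by rewrite /b expr0 mul1r Q0.
elim: n => [|n [IH1 IH2]].
  split; first by rewrite hb0.
  have := Eid 0; rewrite hq0 mul0r addr0 hb0 /a Q0 mulr1 => e.
  have := hp 0%N; have := hr 0%N; nra.
have hbn : 0 < b n.+1.
  have := apos n; have := apos n.+1; rewrite -/(a n) -/(a n.+1).
  move: IH2; rewrite /E; nra.
split => //.
have e := Eid n.+1; rewrite /= in e.
have h1 : 0 <= r n.+1 * a n.+1 * b n.+1.
  by apply: mulr_ge0; [apply: mulr_ge0; [exact: hr|exact: ltW (apos _)]|exact: ltW].
have h2 : q n.+1 * E n <= 0 by rewrite pmulr_rle0.
have : p n.+1 * E n.+1 <= 0 by rewrite e; lra.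
by rewrite pmulr_rle0.
Qed.

Lemma ratioE n : `| Q n th / Q n (- th) | = a n / b n.
Proof.
have [hb _] := bposE n.
have -> : Q n (- th) = (-1) ^+ n * b n.
  by rewrite /b mulrA -exprMn mulrNN mulr1 expr1n mul1r.
rewrite normrM normfV normrM normrX normrN1 expr1n mul1r.
by rewrite !gtr0_norm // /a; apply: apos.
Qed.

Lemma ratio_diff n : a n / b n - a n.+1 / b n.+1 = - E n / (b n * b n.+1).
Proof.
have [h1 _] := bposE n; have [h2 _] := bposE n.+1.
rewrite /E; field; apply/andP; split; exact: lt0r_neq0.
Qed.

Lemma ratio_main :
  ((forall j, r j = 0) ->
     forall n, `| Q n th / Q n (- th) | = 1) /\
  ((exists j, 0 < r j) ->
     (forall n, `| Q n.+1 th / Q n.+1 (- th) | <= `| Q n th / Q n (- th) |) /\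
     exists l : R,
       (fun n => `| Q n th / Q n (- th) |) @ \oo --> l /\ 0 <= l < 1).
Proof.
have mono n : `| Q n.+1 th / Q n.+1 (- th) | <= `| Q n th / Q n (- th) |.
  rewrite !ratioE -subr_ge0 ratio_diff.
  have [h1 h3] := bposE n; have [h2 _] := bposE n.+1.
  by apply: divr_ge0; [rewrite oppr_ge0|apply: mulr_ge0; apply: ltW].
split.
  move=> r0.
  have E0 n : E n = 0.
    elim: n => [|n IH].
      have := Eid 0; rewrite hq0 r0 mulr0 !mul0r addr0 => /eqP.
      by rewrite mulf_eq0 gt_eqF //= => /eqP.
    have := Eid n.+1; rewrite /= r0 IH !mulr0 !mul0r add0r => /eqP.
    by rewrite mulf_eq0 gt_eqF //= => /eqP.
  have ab n : a n = b n.
    elim: n => [|n IH]; first by rewrite /a /b Q0 expr0 mul1r.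
    have := E0 n; rewrite /E IH => /eqP; rewrite subr_eq0 mulrC => /eqP.
    have [hb _] := bposE n.
    by move/mulfI; apply; exact: lt0r_neq0.
  move=> n; rewrite ratioE ab divff //; have [hb _] := bposE n; exact: lt0r_neq0.
move=> [j rj]; split => //.
pose u := fun n => `| Q n th / Q n (- th) |.
have ninc : nonincreasing_seq u by apply/nonincreasing_seqP => n; exact: mono.
have u0 n : 0 <= u n by rewrite /u normr_ge0.
have lb : has_lbound (range u) by exists 0 => _ [n _ <-]; exact: u0.
have cu : cvgn u by exact: nonincreasing_is_cvgn.
exists (limn u); split; first exact: cu.
apply/andP; split.
  by apply: limr_ge => //; near=> n; exact: u0.
have strict : u j.+1 < u j.
  rewrite /u !ratioE -subr_gt0 ratio_diff.
  have [h1 _] := bposE j; have [h2 _] := bposE j.+1.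
  apply: divr_gt0; last exact: mulr_gt0.
  rewrite oppr_gt0.
  have e := Eid j.
  have h3 : q j * E j.-1 <= 0.
    case: j {rj e h1 h2} => [|k]; first by rewrite hq0 mul0r.
    by rewrite pmulr_rle0 //; case: (bposE k).
  have h4 : 0 < r j * a j * b j by apply: mulr_gt0 => //; apply: mulr_gt0 => //; exact: apos.
  have : p j * E j < 0 by rewrite e; lra.
  by rewrite pmulr_rlt0.
have uj : u j <= u 0%N by apply: ninc.
have u01 : u 0%N = 1 by rewrite /u Q0 divr1 normr1.
apply: (le_lt_trans (nonincreasing_cvgn_ge ninc cu j.+1)).
by rewrite -u01; exact: lt_le_trans strict uj.
Unshelve. all: by end_near.
Qed.

End Ratio.
End Alg.
Section Poly.
Variable R : realType.
Variables p q r : nat -> R.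

Fixpoint Qppair (n : nat) : {poly R} * {poly R} :=
  match n with
  | 0%N => (1, ('X - (r 0%N)%:P) * ((p 0%N)^-1)%:P)
  | m.+1 => let: (A, B) := Qppair m in
            (B, (('X - (r m.+1)%:P) * B - (q m.+1)%:P * A) * ((p m.+1)^-1)%:P)
  end.

Definition Qpol n := (Qppair n).1.

Lemma Qpol_horner n x : (Qpol n).[x] = Qn p q r n x.
Proof.
suff : (Qppair n).1.[x] = (Qpair p q r n x).1 /\ (Qppair n).2.[x] = (Qpair p q r n x).2.
  by case.
elim: n => [|n [IH1 IH2]] /=.
  by rewrite !hornerE.
move: IH1 IH2; case: (Qppair n) => A B; case: (Qpair p q r n x) => a b /= IH1 IH2.
by split => //; rewrite !hornerE IH1 IH2.
Qed.

Lemma Qn_cont n : continuous (Qn p q r n).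
Proof.
have -> : Qn p q r n = horner (Qpol n) by apply/funext => x; rewrite Qpol_horner.
exact: continuous_horner.
Qed.
End Poly.

Section Integ.
Variable R : realType.
Variable psi : probability R R.
Hypothesis hpsi_supp : psi (~` `[-1, 1]) = 0%E.

Lemma cont_integrable (g : R -> R) : continuous g ->
  psi.-integrable setT (EFin \o g).
Proof.
move=> cg.
have mD : measurable (`[-1, 1] : set R) by apply: compact_measurable; exact: segment_compact.
have mN : measurable (~` (`[-1, 1] : set R)) by exact: measurableC.
have mg : measurable_fun setT (EFin \o g).
  by apply/measurable_EFinP; exact: continuous_measurable_fun.
apply/(negligible_integrable mN measurableT mg hpsi_supp).
rewrite setTD setCK.
apply: measurable_bounded_integrable => //.
- by apply: (le_lt_trans (probability_le1 psi mD)); exact: ltry.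
- by apply: (measurable_funS measurableT) => //; exact: continuous_measurable_fun.
- have /compact_bounded[M [_ mrt]] : compact (g @` `[-1, 1]).
    apply: continuous_compact; last exact: segment_compact.
    by apply: continuous_subspaceT.
  by exists M; split; rewrite ?num_real // => ? ? ? ?; apply: mrt.
Qed.
End Integ.

Section Supp.
Variable R : realType.
Variable psi : probability R R.
Hypothesis hpsi_supp : psi (~` `[-1, 1]) = 0%E.
Hypothesis hpsi_inf : infinite_set (msupport psi).

Let mD : measurable (`[-1, 1] : set R).
Proof. by apply: compact_measurable; exact: segment_compact. Qed.

Lemma supp_sub : msupport psi `<=` `[-1, 1].
Proof.
move=> x sx; apply/not_notP => nx.
have h : (0 < psi (~` `[(-1)%R, 1%R]))%E.
  apply: sx => //.
  by apply: closed_openC; apply: interval_closed.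
by rewrite hpsi_supp ltxx in h.
Qed.

Lemma supp_has_sup : has_sup (msupport psi).
Proof.
split; first exact: infinite_setN0.
by exists 1 => x /supp_sub; rewrite /= in_itv /= => /andP[_ ->].
Qed.

Lemma supp_ub x : msupport psi x -> x <= sup (msupport psi).
Proof. by move=> sx; apply: sup_upper_bound => //; exact: supp_has_sup. Qed.


Lemma tail_null_gt s : sup (msupport psi) < s -> psi `]s, +oo[%classic = 0%E.
Proof.
move=> hs; apply/eqP; rewrite eq_le measure_ge0 andbT leNgt; apply/negP => pos.
pose A := [set u : R | (0 < psi `]u, +oo[%classic)%E].
have As : A s by [].
have Aub : ubound A 1.
  move=> u Au; rewrite leNgt; apply/negP => u1.
  have : (psi `]u, +oo[%classic <= psi (~` `[(-1)%R, 1%R]))%E.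
    apply: le_measure; rewrite ?inE; first exact: measurable_itv.
      exact: measurableC.
    move=> y; rewrite /= !in_itv /= andbT => uy /andP[_ y1]; lra.
  by rewrite hpsi_supp; move: Au; rewrite /A /= => /lt_le_trans h /h; rewrite ltxx.
have hA : has_sup A by split; [exists s | exists 1].
set s0 := sup A.
have ss0 : s <= s0 := sup_upper_bound hA As.
have Ssupp : msupport psi s0.
  move=> U oU Us0.
  have /nbhs_ballP[e /= e0 sub] : nbhs s0 U by apply: open_nbhs_nbhs.
  have [u Au ltu] := sup_adherent e0 hA; rewrite -/s0 in ltu.
  have nA : ~ A (s0 + e / 2).
    move=> /(sup_upper_bound hA); rewrite -/s0; lra.
  have z : psi `](s0 + e / 2), +oo[%classic = 0%E.
    apply/eqP; rewrite eq_le measure_ge0 andbT leNgt; apply/negP => h; exact: nA.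
  have sub2 : `]u, +oo[%classic `<=` U `|` `](s0 + e / 2), +oo[%classic.
    move=> y; rewrite /= in_itv /= andbT => uy.
    case: (ltP y (s0 + e)) => h.
      left; apply: sub; rewrite ball_itv /= in_itv /=; apply/andP; split; lra.
    by right; rewrite /= in_itv /= andbT; lra.
  have mU : measurable U by exact: open_measurable.
  have : (psi `]u, +oo[%classic <= psi U + psi `](s0 + e / 2)%R, +oo[%classic)%E.
    apply: (@le_trans _ _ (psi (U `|` `](s0 + e / 2)%R, +oo[%classic))).
      apply: le_measure => //; rewrite ?inE; first exact: measurable_itv.
      by apply: measurableU => //; exact: measurable_itv.
    by apply: measureU2 => //; exact: measurable_itv.
  by rewrite z adde0; apply: lt_le_trans.
have := @supp_ub s0 Ssupp; lra.
Qed.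

Lemma tail_null t : sup (msupport psi) <= t -> psi `]t, +oo[%classic = 0%E.
Proof.
move=> ht.
have eq : `]t, +oo[%classic = \bigcup_k `](t + (k.+1%:R)^-1), +oo[%classic :> set R.
  apply/seteqP; split.
    move=> y; rewrite /= in_itv /= andbT => ty.
    exists (Num.truncn ((y - t)^-1)) => //; rewrite /= in_itv /= andbT.
    have h := Num.Theory.truncnS_gt ((y - t)^-1).
    have yt : 0 < y - t by lra.
    rewrite -ltrBrDl -[X in _ < X]invrK ltf_pV2 ?posrE ?invr_gt0 ?ltr0n //.
  move=> y [k _]; rewrite /= !in_itv /= !andbT => h.
  have : 0 < (k.+1%:R : R)^-1 by rewrite invr_gt0 ltr0n.
  by move=> hk; apply: lt_trans h; rewrite ltrDl.
have N : psi.-negligible `]t, +oo[%classic.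
  rewrite eq; apply: negligible_bigcup => k; apply/negligibleP.
    exact: measurable_itv.
  apply: tail_null_gt.
  have : 0 < (k.+1%:R : R)^-1 by rewrite invr_gt0 ltr0n.
  by move=> hk; apply: le_lt_trans ht _; rewrite ltrDl.
by apply/negligibleP => //; exact: measurable_itv.
Qed.

End Supp.

Section Main.
Variable R : realType.
Variables p q r : nat -> R.
Hypothesis hp : forall j, 0 < p j.
Hypothesis hq : forall j, 0 < q j.+1.
Hypothesis hr : forall j, 0 <= r j.
Hypothesis hq0 : q 0%N = 0.
Hypothesis hsum : forall j, p j + q j + r j = 1.
Variable psi : probability R R.
Hypothesis hpsi_supp : psi (~` `[-1, 1]) = 0%E.
Hypothesis hpsi_inf : infinite_set (msupport psi).
Hypothesis hpsi_orth : forall n m : nat, n <> m ->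
     (\int[psi]_x ((Qn p q r n x * Qn p q r m x)%:E) = 0)%E.

Notation Q := (Qn p q r).

Fixpoint piw (n : nat) : R := if n is m.+1 then piw m * p m / q m.+1 else 1.

Lemma piw_gt0 n : 0 < piw n.
Proof.
elim: n => [|n IH] /=; first exact: ltr01.
by apply: divr_gt0; [apply: mulr_gt0|].
Qed.

Lemma CD m x y : (x - y) * \sum_(k < m.+1) piw k * Q k x * Q k y =
  piw m * p m * (Q m.+1 x * Q m y - Q m x * Q m.+1 y).
Proof.
elim: m => [|m IH].
  rewrite big_ord1 /= !Q1 !Q0; field; exact: lt0r_neq0.
rewrite big_ord_recr /= mulrDr IH.
have e1 := @Qrec _ p q r hp hq0 m.+1 x; have e2 := @Qrec _ p q r hp hq0 m.+1 y; rewrite /= in e1 e2.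
transitivity (piw m.+1 * ((p m.+1 * Q m.+2 x) * Q m.+1 y - Q m.+1 x * (p m.+1 * Q m.+2 y))); last by rewrite /=; ring.
rewrite e1 e2 /=.
have qn := lt0r_neq0 (hq m).
field; exact: qn.
Qed.

Lemma consec m t : Q m.+1 t = 0 -> Q m t = 0 -> False.
Proof.
elim: m => [|m IH] h1 h0; first by rewrite Q0 in h0; move/eqP: h0; rewrite oner_eq0.
have := @Qrec _ p q r hp hq0 m.+1 t; rewrite /= h1 h0 !mulr0 sub0r => /esym /eqP.
rewrite oppr_eq0 mulf_eq0 (negbTE (lt0r_neq0 (hq m))) /= => /eqP; exact: IH.
Qed.

Lemma prod_cont (c : R) a b : continuous (fun x => c * (Q a x * Q b x)).
Proof.
have -> : (fun x => c * (Q a x * Q b x)) = horner (c%:P * (Qpol _ p q r a * Qpol _ p q r b)).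
  by apply/funext => x; rewrite !hornerE !Qpol_horner.
exact: continuous_horner.
Qed.


Lemma noroot n t : sup (msupport psi) <= t -> Q n t != 0.
Proof.
move=> ht; apply/negP => /eqP Qt.
case: n Qt => [|m] Qt; first by move/eqP: Qt; rewrite Q0 oner_eq0.
have Qmt : Q m t != 0 by apply/negP => /eqP; exact: consec.
pose S x := \sum_(k < m.+1) piw k * Q k x * Q k t.
pose K := piw m * p m * Q m t.
have hS x : (x - t) * S x = K * Q m.+1 x.
  by rewrite /S CD Qt !mulr0 subr0 /K; ring.
pose f x := (t - x) * S x ^+ 2.
have hf x : f x = \sum_(k < m.+1) (- K * (piw k * Q k t)) * (Q m.+1 x * Q k x).
  transitivity (- ((x - t) * S x) * S x); first by rewrite /f; ring.
  rewrite hS /S mulr_sumr; apply: eq_bigr => k _; ring.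
have Pf : exists P : {poly R}, forall x, f x = P.[x].
  exists ((t%:P - 'X) * (\sum_(k < m.+1) (piw k * Q k t)%:P * Qpol _ p q r k) ^+ 2).
  move=> x.
  have e : (\sum_(k < m.+1) (piw k * Q k t)%:P * Qpol _ p q r k).[x] = S x.
    by rewrite horner_sum; apply: eq_bigr => k _; rewrite !hornerE Qpol_horner; ring.
  by rewrite hornerM horner_exp e /f !hornerE.
have [P hP] := Pf.
have fcont : continuous f.
  have -> : f = horner P by apply/funext => x; rewrite hP.
  exact: continuous_horner.
have intf0 : (\int[psi]_x (f x)%:E = 0)%E.
  under eq_integral do rewrite hf -sumEFin.
  rewrite integral_sum //; last first.
    move=> k; apply: cont_integrable => //; exact: prod_cont.
  rewrite big1 // => k _.
  rewrite (_ : (fun x => _) = (fun x => ((- K * (piw k * Q k t))%:E * (Q m.+1 x * Q k x)%:E)%E)); last first.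
    by apply/funext => x.
  rewrite integralZl //; last first.
    have cg : continuous (fun x => Q m.+1 x * Q k x).
      have := prod_cont 1 m.+1 k.
      by rewrite (_ : (fun x => 1 * _) = (fun x => Q m.+1 x * Q k x)) // ; apply/funext => x; rewrite mul1r.
    exact: (@cont_integrable R psi hpsi_supp _ cg).
  rewrite hpsi_orth ?mule0 //.
  by move=> h; have := ltn_ord k; rewrite -h ltnn.
have ex0 : exists x0, msupport psi x0 /\ f x0 != 0.
  apply: contrapT => H.
  have allz x : msupport psi x -> f x = 0.
    by move=> sx; apply: contrapT => nz; apply: H; exists x; split => //; apply/eqP.
  have [B BS szB] := infinite_set_fset (size P) hpsi_inf.
  have P0 : P = 0.
    apply: (@roots_geq_poly_eq0 _ P (finmap.enum_fset B)) => //.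
      apply/allP => x xB; rewrite /root -hP allz //; exact: BS.
    exact: finmap.fset_uniq.
  pose x1 := `|t| + 2.
  have x1t : t < x1 by rewrite /x1; have := ler_norm t; lra.
  have x1ge : 1 <= x1 by rewrite /x1; have := normr_ge0 t; lra.
  have /andP[Qx1 _] := @Qge1 _ p q r hp hq hr hq0 hsum x1 x1ge m.+1.
  have Kn : K != 0.
    rewrite /K !mulf_neq0 //; apply: lt0r_neq0; [exact: piw_gt0|exact: hp].
  have Sx1 : S x1 != 0.
    apply/negP => /eqP S0; have := hS x1; rewrite S0 mulr0 => /esym /eqP.
    by rewrite mulf_eq0 (negbTE Kn) /= (negbTE (lt0r_neq0 Qx1)).
  have : f x1 != 0.
    rewrite /f mulf_neq0 ?expf_neq0 //; rewrite subr_eq0; apply/negP => /eqP h.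
    by move: x1t; rewrite h ltxx.
  by rewrite hP P0 horner0 eqxx.
have [x0 [sx0 fx0]] := ex0.
have x0t : x0 <= t := le_trans (@supp_ub R psi hpsi_supp hpsi_inf x0 sx0) ht.
have fpos : 0 < f x0.
  rewrite lt0r fx0 /= /f; apply: mulr_ge0; [by rewrite subr_ge0|exact: sqr_ge0].
pose N := `]t, +oo[%classic : set R.
have N0 : psi N = 0%E := @tail_null R psi hpsi_supp hpsi_inf t ht.
have mN : measurable N by exact: measurable_itv.
have intf : psi.-integrable setT (EFin \o f) := @cont_integrable R psi hpsi_supp f fcont.
have e1 := negligible_integral mN measurableT intf N0.
pose D := setT `\` N.
have mDD : measurable D by exact: measurableD.
have fD x : D x -> 0 <= f x.
  rewrite /D /N /= in_itv /= andbT => -[_ h]; rewrite /f.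
  apply: mulr_ge0; last exact: sqr_ge0.
  by rewrite subr_ge0 leNgt; apply/negP.
have mf : measurable_fun D (EFin \o f).
  apply: (measurable_funS measurableT) => //; apply/measurable_EFinP.
  exact: continuous_measurable_fun.
have absI : (\int[psi]_(x in D) `|(EFin \o f) x| = 0)%E.
  rewrite -intf0 e1; apply: eq_integral => x /set_mem Dx.
  by apply: gee0_abs; rewrite /= lee_fin; apply: fD.
have := (ae_eq_integral_abs psi mDD mf).1 absI.
case=> M [mM M0 sub].
pose V := f @^-1` [set y | 0 < y].
have oV : open V by apply: open_comp => [x _|]; [exact: fcont|exact: open_gt].
have Vpos : (0 < psi V)%E by apply: sx0.
have mV : measurable V by exact: open_measurable.
have : (psi V <= psi M + psi N)%E.
  apply: (@le_trans _ _ (psi (M `|` N))); last exact: measureU2.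
  apply: le_measure; rewrite ?inE //; first exact: measurableU.
  move=> x Vx; case: (pselect (N x)) => h; [by right|left].
  apply: sub => /= h2; have := h2 (conj I h) => /= -[] fx.
  by move: Vx; rewrite /V /= fx ltxx.
rewrite M0 N0 adde0 => le.
by have := lt_le_trans Vpos le; rewrite ltxx.
Qed.

End Main.
Theorem lemma2 (R : realType) (p q r : nat -> R)
  (hp : forall j, 0 < p j) (hq : forall j, 0 < q j.+1) (hr : forall j, 0 <= r j)
  (hq0 : q 0%N = 0) (hsum : forall j, p j + q j + r j = 1)
  (psi : probability R R)
  (hpsi_supp : psi (~` `[-1, 1]) = 0%E)
  (hpsi_inf : infinite_set (msupport psi))
  (hpsi_orth : forall n m : nat, n <> m ->
     (\int[psi]_x ((Qn p q r n x * Qn p q r m x)%:E) = 0)%E)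
  (theta : R) (htheta : sup (msupport psi) <= theta) :
  ((forall j, r j = 0) ->
     forall n, `| Qn p q r n theta / Qn p q r n (- theta) | = 1) /\
  ((exists j, 0 < r j) ->
     (forall n, `| Qn p q r n.+1 theta / Qn p q r n.+1 (- theta) |
                <= `| Qn p q r n theta / Qn p q r n (- theta) |) /\
     exists l : R,
       (fun n => `| Qn p q r n theta / Qn p q r n (- theta) |) @ \oo --> l
       /\ 0 <= l < 1).
Proof.
have nz t n : sup (msupport psi) <= t -> Qn p q r n t != 0.
  exact: (@noroot R p q r hp hq hr hq0 hsum psi hpsi_supp hpsi_inf hpsi_orth n t).
have apos n : 0 < Qn p q r n theta.
  rewrite lt_neqAle eq_sym nz //=; rewrite leNgt; apply/negP => neg.
  pose x1 := `|theta| + 2.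
  have x1t : theta <= x1 by rewrite /x1; have := ler_norm theta; lra.
  have x1ge : 1 <= x1 by rewrite /x1; have := normr_ge0 theta; lra.
  have /andP[Qx1 _] := @Qge1 _ p q r hp hq hr hq0 hsum x1 x1ge n.
  have [c /andP[c1 _] Qc] : exists2 c, c \in `[theta, x1] & Qn p q r n c = 0.
    apply: IVT => //.
      by apply: continuous_subspaceT; exact: Qn_cont.
    by rewrite ge_min le_max (ltW neg) (ltW Qx1) orbT.
  by move/eqP: Qc; apply/negP; apply: nz; exact: le_trans htheta c1.
exact: (@ratio_main R p q r hp hq hr hq0 theta apos).
Qed.
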